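(* Let $\pi$ be a stationary deterministic memoryless policy, $\hat q:\mathcal{S}\times\mathcal{A}\to\mathbb{R}$ any function, $\omega>0$ and $\mathcal{S}_{\text{fix}}\subseteq\mathcal{S}$. Let $\pi'=\pi_{\hat q,\pi,\mathcal{S}_{\text{fix}}}$ be the CAPI update. Assume that $|\hat q(s,a)-q^\pi(s,a)|\le\omega$ for all $s\in\mathcal{S}\setminus\mathcal{S}_{\text{fix}}$ and all $a\in\mathcal{A}$. Then $v^{\pi'}(s)\ge v^\pi(s)$ for every $s\in\mathcal{S}$.
   Context: An MDP is $M=(\mathcal{S},\mathcal{A},\mathcal{Q})$ with measurable state space $\mathcal{S}$, finite action set $\mathcal{A}=(\mathcal{A}_1,\dots,\mathcal{A}_{|\mathcal{A}|})$ (with a fixed ordering), and transition-reward kernel $\mathcal{Q}:\mathcal{S}\times\mathcal{A}\to\mathcal{M}_1(\mathcal{S}\times[0,1])$ with marginals $P(\cdot|s,a)$ (next state) and $\mathcal{R}(\cdot|s,a)$ (reward), $r(s,a)$ the mean reward; discount factor $\gamma\in(0,1)$. For a stationary memoryless policy $\pi$, $v^\pi(s)=\mathbb{E}_{\pi,s}[\sum_{t\ge0}\gamma^tR_t]$ and $q^\pi(s,a)=\mathbb{E}_{\pi,s,a}[\sum_{t\ge0}\gamma^tR_t]$ (trajectory started at $s$, resp. with first action $a$, then following $\pi$). For a deterministic policy, $\pi(s)$ denotes the chosen action. CAPI update: given $\hat q$, a deterministic policy $\pi$, $\omega>0$ and $\mathcal{S}_{\text{fix}}\subseteq\mathcal{S}$,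 the deterministic policy $\pi_{\hat q,\pi,\mathcal{S}_{\text{fix}}}$ is defined by $\pi_{\hat q,\pi,\mathcal{S}_{\text{fix}}}(s)=\arg\max_{a\in\mathcal{A}}\hat q(s,a)$ if $s\notin\mathcal{S}_{\text{fix}}$ and $\hat q(s,\pi(s))+\omega<\max_{a}\hat q(s,a)-\omega$, and $=\pi(s)$ otherwise; the argmax breaks ties by choosing the action $\mathcal{A}_i$ with the smallest index $i$. *)

(* Defs.v *)
From HB Require Import structures.
From mathcomp Require Import all_boot all_order all_algebra.
From mathcomp Require Import all_classical all_reals all_analysis.
Set Implicit Arguments.
Unset Strict Implicit.
Unset Printing Implicit Defensive.
Import Order.TTheory GRing.Theory Num.Theory.
Local Open Scope classical_set_scope.
Local Open Scope ring_scope.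

(* An MDP with measurable state space T, finite ordered action set 'I_m.+1
   (action A_i is the ordinal i, ordering = index order), and
   transition-reward kernel Q : S x A -> M_1(S x R) given, for each action a,
   as a probability kernel Q a : T ~> T * R (measurable in the state). *)

Section MDP.
Context {d : measure_display} {T : measurableType d} {R : realType} {m : nat}.
Variable Q : 'I_m.+1 -> R.-pker T ~> (T * R)%type.

Definition mean_reward (s : T) (a : 'I_m.+1) : \bar R :=
  (\int[Q a s]_z (z.2)%:E)%E.

Definition next_int (s : T) (a : 'I_m.+1) (f : T -> \bar R) : \bar R :=
  (\int[Q a s]_z f z.1)%E.

(* expected reward at time t, E_{pi,s}[R_t] = (P_pi^t r_pi)(s),
   for a deterministic memoryless policy pi *)
Fixpoint exp_reward (pi : T -> 'I_m.+1) (t : nat) (s : T) : \bar R :=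
  match t with
  | 0 => mean_reward s (pi s)
  | t'.+1 => next_int s (pi s) (exp_reward pi t')
  end.

Definition exp_reward_q (pi : T -> 'I_m.+1) (t : nat) (s : T) (a : 'I_m.+1)
  : \bar R :=
  match t with
  | 0 => mean_reward s a
  | t'.+1 => next_int s a (exp_reward pi t')
  end.

(* v^pi(s) = E_{pi,s}[sum_t gamma^t R_t] = sum_t gamma^t E_{pi,s}[R_t] *)
Definition vpi (gamma : R) (pi : T -> 'I_m.+1) (s : T) : \bar R :=
  (\sum_(0 <= t <oo) ((gamma ^+ t)%:E * exp_reward pi t s))%E.

Definition qpi (gamma : R) (pi : T -> 'I_m.+1) (s : T) (a : 'I_m.+1) : \bar R :=
  (\sum_(0 <= t <oo) ((gamma ^+ t)%:E * exp_reward_q pi t s a))%E.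

End MDP.

Section CAPI.
Context {T : Type} {R : realType} {m : nat}.

Definition qmax (qhat : T -> 'I_m.+1 -> R) (s : T) : R :=
  \big[Num.max/qhat s ord0]_(a < m.+1) qhat s a.

(* argmax_a qhat(s,a), ties broken by the smallest index *)
Definition greedy (qhat : T -> 'I_m.+1 -> R) (s : T) : 'I_m.+1 :=
  odflt ord0 [pick i : 'I_m.+1 | (qhat s i == qmax qhat s)
                  && [forall j : 'I_m.+1, (j < i)%N ==> (qhat s j != qmax qhat s)]].

Definition capi (qhat : T -> 'I_m.+1 -> R) (pi : T -> 'I_m.+1) (omega : R)
  (Sfix : set T) (s : T) : 'I_m.+1 :=
  if `[< ~ Sfix s >] && (qhat s (pi s) + omega < qmax qhat s - omega)
  then greedy qhat s else pi s.

End CAPI.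

(* Main.v *)
Require Import Defs.
From HB Require Import structures.
From mathcomp Require Import all_boot all_order all_algebra.
From mathcomp Require Import all_classical all_reals all_analysis.
From mathcomp Require Import measurable_realfun.
From mathcomp Require Import lra.
Import Order.TTheory GRing.Theory Num.Theory.
Local Open Scope classical_set_scope.
Local Open Scope ring_scope.
Set Implicit Arguments.
Unset Strict Implicit.



Section Aux.
Context {d : measure_display} {T : measurableType d} {R : realType} {m : nat}.

Lemma sel_meas d' (U : measurableType d') (sg : T -> 'I_m.+1)
  (F : 'I_m.+1 -> T -> U) :
  (forall a, measurable_fun setT (fun s => sg s == a)) ->
  (forall a, measurable_fun setT (F a)) ->
  measurable_fun setT (fun s => F (sg s) s).
Proof.
move=> hs hF.
pose g r s := foldr (fun a acc => if sg s == a then F a s else acc) (F ord0 s) r.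
have -> : (fun s => F (sg s) s) = g (enum 'I_m.+1).
  apply/funext => s; have : sg s \in enum 'I_m.+1 by rewrite mem_enum.
  rewrite /g; elim: (enum _) => //= a r IH; rewrite in_cons => /orP[/eqP->|Hr].
    by rewrite eqxx.
  by case: ifP => [/eqP->|_] //; exact: IH.
rewrite /g; elim: (enum _) => [|a r IH] /=; first exact: hF.
exact: measurable_fun_ifT.
Qed.

Lemma pmeasP (sg : T -> 'I_m.+1) :
  (forall a, measurable (sg @^-1` [set a])) ->
  forall a, measurable_fun setT (fun s => sg s == a).
Proof.
move=> h a; apply: (measurable_fun_bool true); rewrite setTI.
have -> : (fun s => sg s == a) @^-1` [set true] = sg @^-1` [set a].
  by apply/seteqP; split => x /= /eqP.
exact: h.
Qed.

Lemma meas_all (P : 'I_m.+1 -> T -> bool) :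
  (forall j, measurable_fun setT (P j)) ->
  measurable_fun setT (fun s => [forall j, P j s]).
Proof.
move=> hP.
have -> : (fun s => [forall j, P j s]) = (fun s => all (fun j => P j s) (enum 'I_m.+1)).
  apply/funext => s; apply/idP/idP.
    by move/forallP => h; apply/allP => j _; exact: h.
  by move/allP => h; apply/forallP => j; apply: h; rewrite mem_enum.
elim: (enum _) => [|a r IH] /=; first exact: measurable_cst.
exact: measurable_and.
Qed.

Lemma meas_qmax (qhat : T -> 'I_m.+1 -> R) :
  (forall a, measurable_fun setT (fun s => qhat s a)) ->
  measurable_fun setT (qmax qhat).
Proof.
move=> hq; rewrite /qmax.
elim: (index_enum _) => [|a r IH].
  under eq_fun do rewrite big_nil. exact: hq.
under eq_fun do rewrite big_cons.
exact: measurable_maxr.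
Qed.

End Aux.



Section Kern.
Context {d : measure_display} {T : measurableType d} {R : realType} {m : nat}.
Variable Q : 'I_m.+1 -> R.-pker T ~> (T * R)%type.
Hypothesis HQ : forall a s, Q a s [set z | 0 <= z.2 <= 1] = 1%E.

Let S01 := [set z : T * R | 0 <= z.2 <= 1].

Let mS01 : measurable S01.
Proof.
have -> : S01 = [set: T * R] `&` snd @^-1` [set` (`[0%R, 1%R] : interval R)].
  by apply/seteqP; split => z /=; rewrite ?in_itv /=; [move=> h; split|case].
apply: measurable_snd => //; exact: measurable_itv.
Qed.

Definition clamp (z : T * R) : \bar R := (Num.min (Num.max z.2 0) 1)%:E.

Lemma clamp_meas : measurable_fun setT clamp.
Proof.
apply: measurableT_comp => //.
have -> : (fun z : T * R => Num.min (Num.max z.2 0) 1) = ((snd \max cst 0) \min cst 1) by [].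
apply: measurable_minr => //; apply: measurable_maxr => //; exact: measurable_snd.
Qed.

Lemma clamp_ge0 z : (0 <= clamp z)%E.
Proof. by rewrite lee_fin le_min ler01 le_max lexx orbT. Qed.

Lemma clamp_le1 z : (clamp z <= 1)%E.
Proof. by rewrite lee_fin ge_min lexx orbT. Qed.

Lemma nullC a s : Q a s (~` S01) = 0%E.
Proof.
have h : (Q a s (S01 `|` ~` S01) = Q a s S01 + Q a s (~` S01))%E.
  apply: measureU => //; [exact: measurableC|exact: setICr].
move: h; rewrite setUv prob_kernel HQ.
have : (0 <= Q a s (~` S01))%E by exact: measure_ge0.
case: (Q a s (~` S01)) => [r| |] //= r0.
  by move/eqP; rewrite -EFinD eqe => /eqP h; congr (_%:E); lra.
Qed.

Lemma mr_clamp a s : mean_reward Q s a = (\int[Q a s]_z clamp z)%E.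
Proof.
rewrite /mean_reward; apply: ae_eq_integral => //.
- apply: measurableT_comp => //; exact: measurable_snd.
- exact: clamp_meas.
exists (~` S01); split => //; first exact: measurableC.
  exact: nullC.
move=> z /= H hz; apply: H => _; rewrite /clamp; case/andP: hz => h0 h1.
by rewrite max_l // min_l.
Qed.

Lemma mr_meas a : measurable_fun setT (fun s => mean_reward Q s a).
Proof.
rewrite (_ : (fun s => _) = (fun s => \int[Q a s]_z clamp z)%E).
  apply: (measurable_fun_integral_kernel (l := Q a)) => //.
  - exact: measurable_kernel.
  - exact: clamp_ge0.
  - exact: clamp_meas.
by apply/funext => s; exact: mr_clamp.
Qed.

Lemma int_le_cst (mu : R.-pker T ~> (T * R)%type) s (f : T * R -> \bar R) (c : R) :
  measurable_fun setT f -> (forall z, 0 <= f z)%E -> (forall z, f z <= c%:E)%E ->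
  (\int[mu s]_z f z <= c%:E)%E.
Proof.
move=> mf f0 fc.
apply: (@le_trans _ _ (\int[mu s]_z (cst c%:E) z))%E.
  apply: ge0_le_integral => //; exact: measurable_cst.
by rewrite integral_cst // (@prob_kernel _ _ _ _ _ mu) mule1.
Qed.

Lemma mr_ge0 a s : (0 <= mean_reward Q s a)%E.
Proof. rewrite mr_clamp; apply: integral_ge0 => z _; exact: clamp_ge0. Qed.

Lemma mr_le1 a s : (mean_reward Q s a <= 1)%E.
Proof.
rewrite mr_clamp; apply: int_le_cst; [exact: clamp_meas|exact: clamp_ge0|exact: clamp_le1].
Qed.

Lemma ni_meas a (f : T -> \bar R) : measurable_fun setT f -> (forall x, 0 <= f x)%E ->
  measurable_fun setT (fun s => next_int Q s a f).
Proof.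
move=> mf f0; apply: (measurable_fun_integral_kernel (l := Q a)) => //.
- exact: measurable_kernel.
- apply: measurableT_comp => //; exact: measurable_fst.
Qed.

Lemma ni_ge0 a s (f : T -> \bar R) : (forall x, 0 <= f x)%E -> (0 <= next_int Q s a f)%E.
Proof. by move=> f0; apply: integral_ge0 => z _. Qed.

Lemma ni_le a s (f : T -> \bar R) (c : R) : measurable_fun setT f -> (forall x, 0 <= f x)%E ->
  (forall x, f x <= c%:E)%E -> (next_int Q s a f <= c%:E)%E.
Proof.
move=> mf f0 fc; apply: int_le_cst => //.
apply: measurableT_comp => //; exact: measurable_fst.
Qed.

End Kern.



Lemma series_ub (R : realType) (u : nat -> \bar R) (M : \bar R) :
  (forall n, 0 <= u n)%E -> (forall n, \sum_(0 <= i < n) u i <= M)%E ->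
  (\sum_(0 <= i <oo) u i <= M)%E.
Proof.
move=> u0 h.
have hnd : forall n, (0 <= n)%N -> xpredT n -> (0 <= u n)%E by move=> n _ _; exact: u0.
rewrite (cvg_lim _ (ereal_nondecreasing_cvgn (ereal_nondecreasing_series hnd))) //.
by apply: ge_ereal_sup => _ [n _ <-]; exact: h.
Qed.

Section Pol.
Context {d : measure_display} {T : measurableType d} {R : realType} {m : nat}.
Variable Q : 'I_m.+1 -> R.-pker T ~> (T * R)%type.
Hypothesis HQ : forall a s, Q a s [set z | 0 <= z.2 <= 1] = 1%E.
Variable gamma : R.
Hypothesis hg : 0 < gamma < 1.

Definition pmeas (sg : T -> 'I_m.+1) := forall a, measurable_fun setT (fun s => sg s == a).

Lemma er_props sg (hs : pmeas sg) t :
  measurable_fun setT (exp_reward Q sg t) /\ (forall s, 0 <= exp_reward Q sg t s <= 1)%E.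
Proof.
elim: t => [|t [IHm IHb]].
  split; last by move=> s; rewrite /= mr_ge0 ?mr_le1.
  apply: (sel_meas (F := fun a s => mean_reward Q s a)) => // a.
  exact: mr_meas.
have h0 : forall x, (0 <= exp_reward Q sg t x)%E by move=> x; case/andP: (IHb x).
split.
  apply: (sel_meas (F := fun a s => next_int Q s a (exp_reward Q sg t))) => // a.
  exact: ni_meas.
move=> s; rewrite /= ni_ge0 //=; apply: ni_le => // x; by case/andP: (IHb x).
Qed.

Lemma er_meas sg (hs : pmeas sg) t : measurable_fun setT (exp_reward Q sg t).
Proof. by case: (er_props hs t). Qed.
Lemma er_ge0 sg (hs : pmeas sg) t s : (0 <= exp_reward Q sg t s)%E.
Proof. by case: (er_props hs t) => _ /(_ s) /andP[]. Qed.
Lemma er_le1 sg (hs : pmeas sg) t s : (exp_reward Q sg t s <= 1)%E.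
Proof. by case: (er_props hs t) => _ /(_ s) /andP[]. Qed.

Lemma term_ge0 sg (hs : pmeas sg) t s : (0 <= (gamma ^+ t)%:E * exp_reward Q sg t s)%E.
Proof.
apply: mule_ge0; last exact: er_ge0.
by rewrite lee_fin exprn_ge0 //; case/andP: hg => /ltW.
Qed.

Lemma vpi_meas sg (hs : pmeas sg) : measurable_fun setT (vpi Q gamma sg).
Proof.
apply: (@ge0_emeasurable_sum _ _ _ _ (fun t s => (gamma ^+ t)%:E * exp_reward Q sg t s)%E xpredT).
  by move=> k x _ _; exact: term_ge0.
move=> k _; apply: measurable_funeM; exact: er_meas.
Qed.

Definition G := (1 - gamma)^-1.

Lemma vpi_ge0 sg (hs : pmeas sg) s : (0 <= vpi Q gamma sg s)%E.
Proof. apply: nneseries_ge0 => n _ _; exact: term_ge0. Qed.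

Lemma vpi_le sg (hs : pmeas sg) s : (vpi Q gamma sg s <= G%:E)%E.
Proof.
apply: series_ub => [n|n]; first exact: term_ge0.
apply: (@le_trans _ _ (\sum_(0 <= i < n) (gamma ^+ i)%:E)%E).
  apply: lee_sum => i _; rewrite -[X in (_ <= X)%E]mule1; apply: lee_wpmul2l.
    by rewrite lee_fin exprn_ge0 //; case/andP: hg => /ltW.
  exact: er_le1.
rewrite sumEFin lee_fin.
case/andP: hg => g0 g1.
have gn : `|gamma| < 1 by rewrite ger0_norm // ltW.
have := @geometric_le_lim R n 1 gamma ler01 g0 gn.
rewrite /G mul1r => h; apply: le_trans h.
by rewrite /series /= le_eqVlt; apply/orP; left; apply/eqP; apply: eq_bigr => i _; rewrite mul1r.
Qed.

End Pol.



Section Greedy.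
Context {T : Type} {R : realType} {m : nat}.
Variable qhat : T -> 'I_m.+1 -> R.

Definition gpred s (i : 'I_m.+1) := (qhat s i == qmax qhat s) &&
  [forall j : 'I_m.+1, (j < i)%N ==> (qhat s j != qmax qhat s)].

Lemma qmax_att s : exists i, qhat s i = qmax qhat s.
Proof.
rewrite /qmax; elim: (index_enum _) => [|a r [i IH]].
  by exists ord0; rewrite big_nil.
rewrite big_cons -IH. have [h|h] := leP (qhat s a) (qhat s i).
  by exists i.
by exists a.
Qed.

Lemma gpred_ex s : exists i, gpred s i.
Proof.
have [i0 hi0] := qmax_att s.
case: (@arg_minnP _ i0 (fun i => qhat s i == qmax qhat s) val (introT eqP hi0)) => i hi hmin.
exists i; rewrite /gpred hi /=; apply/forallP => j; apply/implyP => ji; apply/negP => hj.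
by have := hmin j hj; rewrite leqNgt ji.
Qed.

Lemma gpred_uniq s i j : gpred s i -> gpred s j -> i = j.
Proof.
move=> /andP[hi fi] /andP[hj fj].
case: (ltngtP i j) => [lt|lt|/ord_inj //].
  by move: (implyP (forallP fj i) lt); rewrite hi.
by move: (implyP (forallP fi j) lt); rewrite hj.
Qed.
Lemma greedy_gpred s : gpred s (greedy qhat s).
Proof.
rewrite /greedy; case: pickP => [i hi|h] //=.
by have [i hi] := gpred_ex s; move: (h i); rewrite /gpred in hi; rewrite hi.
Qed.

Lemma greedy_eq s a : (greedy qhat s == a) = gpred s a.
Proof.
apply/eqP/idP => [<-|h]; first exact: greedy_gpred.
exact: gpred_uniq (greedy_gpred s) h.
Qed.

Lemma greedy_max s : qhat s (greedy qhat s) = qmax qhat s.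
Proof. by case/andP: (greedy_gpred s) => /eqP. Qed.

End Greedy.

Section CapiMeas.
Context {d : measure_display} {T : measurableType d} {R : realType} {m : nat}.

Lemma capi_meas (pi : T -> 'I_m.+1) (qhat : T -> 'I_m.+1 -> R) (omega : R) (Sfix : set T) :
  (forall a, measurable_fun setT (fun s => pi s == a)) ->
  (forall a, measurable_fun setT (fun s => qhat s a)) ->
  measurable Sfix ->
  forall a, measurable_fun setT (fun s => capi qhat pi omega Sfix s == a).
Proof.
move=> hpi hq mS a.
have mqm := meas_qmax hq.
have -> : (fun s => capi qhat pi omega Sfix s == a) =
  (fun s => if `[< ~ Sfix s >] && (qhat s (pi s) + omega < qmax qhat s - omega)
            then gpred qhat s a else pi s == a).
  by apply/funext => s; rewrite /capi; case: ifP => _ //; rewrite greedy_eq.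
apply: measurable_fun_ifT => //.
  apply: measurable_and.
    apply: (measurable_fun_bool true); rewrite setTI.
    have -> : (fun s => `[< ~ Sfix s >]) @^-1` [set true] = ~` Sfix.
      by apply/seteqP; split => x /=; [move/asboolP|move=> h; apply/asboolP].
    exact: measurableC.
  apply: (sel_meas (F := fun b s => qhat s b + omega < qmax qhat s - omega)) => // b.
  apply: measurable_fun_ltr.
    by apply: measurable_funD => //.
  by apply: measurable_funB => //.
apply: measurable_and; first exact: measurable_fun_eqr.
apply: (meas_all (P := fun j s => (j < a)%N ==> (qhat s j != qmax qhat s))) => j.
case: (j < a)%N => /=; last exact: measurable_cst.
by apply: measurable_neg; apply: measurable_fun_eqr.
Qed.

End CapiMeas.



Section Main.
Context {d : measure_display} {T : measurableType d} {R : realType} {m : nat}.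
Variable Q : 'I_m.+1 -> R.-pker T ~> (T * R)%type.
Hypothesis HQ : forall a s, Q a s [set z | 0 <= z.2 <= 1] = 1%E.
Variable gamma : R.
Hypothesis hg : 0 < gamma < 1.

Let g0 : 0 <= gamma. Proof. by case/andP: hg => /ltW. Qed.

Lemma v_q pi s : vpi Q gamma pi s = qpi Q gamma pi s (pi s).
Proof.
by rewrite /vpi /qpi; congr (limn _); apply/funext => n; apply: eq_bigr => -[|t] _.
Qed.

Lemma q_decomp pi (hpi : pmeas pi) s a :
  qpi Q gamma pi s a = (mean_reward Q s a + gamma%:E * next_int Q s a (vpi Q gamma pi))%E.
Proof.
have f0 : forall t, (0 <= (gamma ^+ t)%:E * exp_reward_q Q pi t s a)%E.
  move=> t; apply: mule_ge0; first by rewrite lee_fin exprn_ge0.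
  case: t => [|t] /=; first exact: mr_ge0.
  by apply: ni_ge0 => x; exact: er_ge0.
rewrite /qpi (@nneseries_recl _ xpredT) // expr0 mul1e; congr (_ + _)%E.
rewrite -(nneseries_addn 1) //.
transitivity (gamma%:E * \sum_(0 <= t <oo) ((gamma ^+ t)%:E * next_int Q s a (exp_reward Q pi t)))%E.
  rewrite -nneseriesZl; last first.
    move=> t _; apply: mule_ge0; first by rewrite lee_fin exprn_ge0.
    by apply: ni_ge0 => x; exact: er_ge0.
  apply: eq_eseriesr => t _.
  by rewrite addn1 /= exprS EFinM muleA.
congr (_ * _)%E.
rewrite /next_int /vpi.
rewrite (integral_nneseries (Q a s) measurableT (f := fun n z => (gamma ^+ n)%:E * exp_reward Q pi n z.1)%E).
- apply: eq_eseriesr => t _; rewrite ge0_integralZl_EFin //.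
  + by move=> z _; exact: er_ge0.
  + apply: measurableT_comp; [exact: er_meas|exact: measurable_fst].
  + exact: exprn_ge0.
- move=> n; apply: measurable_funeM; apply: measurableT_comp; [exact: er_meas|exact: measurable_fst].
- by move=> n z _; exact: term_ge0.
Qed.

End Main.



Lemma abs_bnd (R : realType) (x w : R) (y : \bar R) :
  (`|x%:E - y| <= w%:E)%E -> ((x - w)%:E <= y)%E /\ (y <= (x + w)%:E)%E.
Proof.
case: y => [r| |] //=.
rewrite lee_fin ler_norml => /andP[h1 h2].
by rewrite !lee_fin; split; lra.
Qed.

Fixpoint Uit {d : measure_display} {T : measurableType d} {R : realType} {m : nat}
  (Q : 'I_m.+1 -> R.-pker T ~> (T * R)%type) (sg : T -> 'I_m.+1) (v : T -> \bar R) (n : nat) : T -> \bar R :=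
  match n with
  | 0 => v
  | n'.+1 => fun s => next_int Q s (sg s) (Uit Q sg v n')
  end.

Section Final.
Context {d : measure_display} {T : measurableType d} {R : realType} {m : nat}.
Variable Q : 'I_m.+1 -> R.-pker T ~> (T * R)%type.
Hypothesis HQ : forall a s, Q a s [set z | 0 <= z.2 <= 1] = 1%E.
Variable gamma : R.
Hypothesis hg : 0 < gamma < 1.

Let g0 : 0 <= gamma. Proof. by case/andP: hg => /ltW. Qed.

Lemma Uit_props sg (hs : pmeas sg) pi (hpi : pmeas pi) n :
  measurable_fun setT (Uit Q sg (vpi Q gamma pi) n) /\
  (forall s, 0 <= Uit Q sg (vpi Q gamma pi) n s <= (G gamma)%:E)%E.
Proof.
elim: n => [|n [IHm IHb]] /=.
  split; first exact: vpi_meas.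
  by move=> s; rewrite vpi_ge0 //= vpi_le.
have h0 : forall x, (0 <= Uit Q sg (vpi Q gamma pi) n x)%E by move=> x; case/andP: (IHb x).
split.
  apply: (sel_meas (F := fun a s => next_int Q s a (Uit Q sg (vpi Q gamma pi) n))) => // a.
  exact: ni_meas.
move=> s; rewrite ni_ge0 //=; apply: ni_le => // x; by case/andP: (IHb x).
Qed.

Lemma improve pi (hpi : pmeas pi) (qhat : T -> 'I_m.+1 -> R) omega Sfix :
  (forall s a, ~ Sfix s ->
     (`| (qhat s a)%:E - qpi Q gamma pi s a | <= omega%:E)%E) ->
  forall s, (qpi Q gamma pi s (pi s) <= qpi Q gamma pi s (capi qhat pi omega Sfix s))%E.
Proof.
move=> H s; rewrite /capi; case: ifP => [/andP[/asboolP nS lt]|_] //.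
have [_ h1] := abs_bnd (H s (pi s) nS).
have [h2 _] := abs_bnd (H s (greedy qhat s) nS).
apply: le_trans h1 _; apply: le_trans h2.
by rewrite lee_fin greedy_max ltW.
Qed.

End Final.

Unset Implicit Arguments.
Set Strict Implicit.

Theorem lemma3p1 (d : measure_display) (T : measurableType d) (R : realType)
  (m : nat) (Q : 'I_m.+1 -> R.-pker T ~> (T * R)%type) (gamma : R)
  (pi : T -> 'I_m.+1) (qhat : T -> 'I_m.+1 -> R) (omega : R) (Sfix : set T) :
  (forall a s, Q a s [set z | 0 <= z.2 <= 1] = 1%E) ->
  0 < gamma < 1 ->
  (forall a, measurable (pi @^-1` [set a])) ->
  (forall a, measurable_fun setT (fun s => qhat s a)) ->
  measurable Sfix ->
  0 < omega ->
  (forall s a, ~ Sfix s ->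
     (`| (qhat s a)%:E - qpi Q gamma pi s a | <= omega%:E)%E) ->
  forall s, (vpi Q gamma pi s <= vpi Q gamma (capi qhat pi omega Sfix) s)%E.
Proof.
move=> HQ hg hpi0 hq mS hw H s.
have g0 : 0 <= gamma by case/andP: hg => /ltW.
have hpi : pmeas pi := pmeasP hpi0.
set sg := capi qhat pi omega Sfix.
have hs : pmeas sg := capi_meas omega hpi hq mS.
set v := vpi Q gamma pi.
have vm : measurable_fun setT v := vpi_meas HQ hg hpi.
have v0 : forall x, (0 <= v x)%E := vpi_ge0 HQ hg hpi.
have step : forall x, (v x <= exp_reward Q sg 0 x + gamma%:E * next_int Q x (sg x) v)%E.
  move=> x; rewrite /v v_q; apply: le_trans (improve hpi H x) _.
  by rewrite (q_decomp HQ hg hpi).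
have claim : forall n x, (v x <= \sum_(0 <= t < n) ((gamma ^+ t)%:E * exp_reward Q sg t x)
        + (gamma ^+ n)%:E * Uit Q sg v n x)%E.
  elim=> [|n IH] x.
    by rewrite big_geq // add0e expr0 mul1e.
  apply: le_trans (step x) _.
  rewrite big_nat_recl // expr0 mul1e -(addeA (exp_reward Q sg 0 x)). apply: leeD2l.
  have [Um Ub] := Uit_props HQ hg hs hpi n.
  have U0 : forall z, (0 <= Uit Q sg v n z)%E by move=> z; case/andP: (Ub z).
  have em : forall t, measurable_fun setT (fun z : T * R => (gamma ^+ t)%:E * exp_reward Q sg t z.1)%E.
    move=> t; apply: measurable_funeM; apply: measurableT_comp; [exact: er_meas|exact: measurable_fst].
  have e0 : forall t (z : T * R), (0 <= (gamma ^+ t)%:E * exp_reward Q sg t z.1)%E.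
    by move=> t z; exact: term_ge0.
  have Um' : measurable_fun setT (fun z : T * R => (gamma ^+ n)%:E * Uit Q sg v n z.1)%E.
    apply: measurable_funeM; apply: measurableT_comp; [exact: Um|exact: measurable_fst].
  have U0' : forall z : T * R, (0 <= (gamma ^+ n)%:E * Uit Q sg v n z.1)%E.
    by move=> z; apply: mule_ge0; [rewrite lee_fin exprn_ge0|exact: U0].
  have Sm : measurable_fun setT (fun z : T * R => \sum_(0 <= t < n) ((gamma ^+ t)%:E * exp_reward Q sg t z.1))%E.
    exact: emeasurable_sum.
  have S0 : forall z : T * R, (0 <= \sum_(0 <= t < n) ((gamma ^+ t)%:E * exp_reward Q sg t z.1))%E.
    by move=> z; apply: sume_ge0 => t _.
  have le1 : (next_int Q x (sg x) v <= next_int Q x (sg x) (fun z =>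
      \sum_(0 <= t < n) ((gamma ^+ t)%:E * exp_reward Q sg t z)
        + (gamma ^+ n)%:E * Uit Q sg v n z))%E.
    apply: ge0_le_integral.
    - exact: measurableT.
    - by move=> z _; exact: v0.
    - apply: measurableT_comp; [exact: vm|exact: measurable_fst].
    - exact: emeasurable_funD.
    - by move=> z _; exact: IH.
  have gE : (0 <= gamma%:E)%E by rewrite lee_fin.
  apply: le_trans (lee_wpmul2l gE le1) _.
  have eqS : (\int[Q (sg x) x]_z (\sum_(0 <= t < n) ((gamma ^+ t)%:E * exp_reward Q sg t z.1))
      = \sum_(0 <= t < n) ((gamma ^+ t)%:E * exp_reward Q sg t.+1 x))%E.
    rewrite ge0_integral_sum; first last.
    - by move=> t z _; exact: e0.
    - exact: em.
    - exact: measurableT.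
    apply: eq_bigr => t _; rewrite ge0_integralZl_EFin.
    - by [].
    - exact: measurableT.
    - by move=> z _; exact: er_ge0.
    - apply: measurableT_comp; [exact: er_meas|exact: measurable_fst].
    - exact: exprn_ge0.
  have eqU : (\int[Q (sg x) x]_z ((gamma ^+ n)%:E * Uit Q sg v n z.1)
      = (gamma ^+ n)%:E * Uit Q sg v n.+1 x)%E.
    rewrite ge0_integralZl_EFin.
    - by [].
    - exact: measurableT.
    - by move=> z _; exact: U0.
    - apply: measurableT_comp; [exact: Um|exact: measurable_fst].
    - exact: exprn_ge0.
  rewrite /next_int ge0_integralD; first last.
  - exact: Um'.
  - by move=> z _; exact: U0'.
  - exact: Sm.
  - by move=> z _; exact: S0.
  - exact: measurableT.
  rewrite eqS eqU ge0_muleDr; first last.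
  - apply: mule_ge0; first by rewrite lee_fin exprn_ge0.
    by case/andP: ((Uit_props HQ hg hs hpi n.+1).2 x).
  - by apply: sume_ge0 => t _; apply: mule_ge0; [rewrite lee_fin exprn_ge0|exact: er_ge0].
  rewrite ge0_sume_distrr; last by move=> t _; apply: mule_ge0; [rewrite lee_fin exprn_ge0|exact: er_ge0].
  apply: leeD.
    by apply: lee_sum => t _; rewrite muleA -EFinM -exprS.
  by rewrite muleA -EFinM -exprS.
have fin : forall n, (v s <= vpi Q gamma sg s + (G gamma * gamma ^+ n)%:E)%E.
  move=> n; apply: le_trans (claim n s) _; apply: leeD.
    apply: (@nneseries_lim_ge _ _ xpredT 0 n) => t _ _; exact: term_ge0.
  have [_ Ub] := Uit_props HQ hg hs hpi n.
  rewrite mulrC EFinM; apply: lee_wpmul2l; first by rewrite lee_fin exprn_ge0.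
  by case/andP: (Ub s).
apply/lee_addgt0Pr => e e0.
have gn : `|gamma| < 1 by case/andP: hg => ? ?; rewrite ger0_norm.
have [N _ hN] := cvgr0_norm_lt _ (cvg_geometric (G gamma) gn) _ e0.
have h := hN N (leqnn N).
apply: le_trans (fin N) _; apply: leeD2l; rewrite lee_fin.
by apply: le_trans (ltW h); exact: ler_norm.
Qed.
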